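(* Let $U$ be a nonempty set, $\pi$ a fixed partition on $U$, and let $\mathcal{B}_\pi=\{\sigma\Rightarrow\pi:\sigma \text{ a partition on } U\}$. Let $\pi_{ns}$ be the set of blocks of $\pi$ with at least two elements. Then the map $\Phi:\mathcal{B}_\pi\to\wp(\pi_{ns})$ sending $\sigma\Rightarrow\pi$ to the set of blocks $B\in\pi_{ns}$ that are contained in some block of $\sigma$ is a well-defined bijection, and for all partitions $\sigma,\tau$ on $U$: (i) $(\sigma\Rightarrow\pi)\vee(\tau\Rightarrow\pi)\in\mathcal{B}_\pi$ and $\Phi$ of it equals $\Phi(\sigma\Rightarrow\pi)\cup\Phi(\tau\Rightarrow\pi)$; (ii) $(\sigma\Rightarrow\pi)\wedge(\tau\Rightarrow\pi)\in\mathcal{B}_\pi$ and $\Phi$ of it equals $\Phi(\sigma\Rightarrow\pi)\cap\Phi(\tau\Rightarrow\pi)$; (iii) $(\sigma\Rightarrow\pi)\Rightarrow(\tau\Rightarrow\pi)\in\mathcal{B}_\pi$ and $\Phi$ of it equals $(\pi_{ns}\setminus\Phi(\sigma\Rightarrow\pi))\cup\Phi(\tau\Rightarrow\pi)$; in particular $\Phi((\sigma\Rightarrow\pi)\Rightarrow\pi)=\pi_{ns}\setminus\Phi(\sigma\Rightarrow\pi)$; (iv) $\pi=\mathbf{1}\Rightarrow\pi\in\mathcal{B}_\pi$ with $\Phi(\pi)=\emptyset$ and $\mathbf{1}=\pi\Rightarrow\pi\in\mathcal{B}_\pi$ with $\Phi(\mathbf{1})=\pi_{ns}$. Consequently $\mathcal{B}_\pi$,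 with the partition join, meet, and $\pi$-negation $\overset{\pi}{\lnot}\sigma:=\sigma\Rightarrow\pi$ as complement, is a Boolean algebra isomorphic to $\wp(\pi_{ns})$, with bottom $\pi$ and top $\mathbf{1}$, contained in the interval $[\pi,\mathbf{1}]$ of the refinement order.
   Context: A partition on a set $U$ is a set of non-empty, pairwise disjoint subsets of $U$ (called blocks) whose union is $U$. Refinement: $\sigma\precsim\pi$ iff every block of $\pi$ is contained in some block of $\sigma$. The discrete partition is $\mathbf{1}=\{\{u\}:u\in U\}$ and the indiscrete partition is $\mathbf{0}=\{U\}$. The join $\pi\vee\sigma$ is the partition whose blocks are the non-empty intersections $B\cap C$, $B\in\pi$, $C\in\sigma$. The meet $\pi\wedge\sigma$ is the partition whose blocks are the equivalence classes of the equivalence relation on $U$ generated by: $u\sim u'$ if $u,u'$ lie in a common block of $\pi$ or in a common block of $\sigma$. The partition implication $\sigma\Rightarrow\pi$ is the partition obtained from $\pi$ by replacing every block $B\in\pi$ that is contained in some block of $\sigma$ by the singletons $\{u\}$, $u\in B$, and leaving every block of $\pi$ not contained in any block of $\sigma$ unchanged. *)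

(* Defs.v *)
(* Equality of sets/partitions is Leibniz equality of predicates
   (provable via functional/propositional extensionality). *)
From Stdlib Require Import Relations.

Set Implicit Arguments.

Section Partitions.
Variable U : Type.

Definition uset := U -> Prop.
Definition upart := uset -> Prop.

Definition subset (A B : uset) : Prop := forall u, A u -> B u.
Definition nonempty (A : uset) : Prop := exists u, A u.

Definition is_partition (P : upart) : Prop :=
  (forall B, P B -> nonempty B) /\
  (forall B C, P B -> P C -> (exists u, B u /\ C u) -> B = C) /\
  (forall u, exists B, P B /\ B u).

Definition refines (sigma pi : upart) : Prop :=
  forall B, pi B -> exists C, sigma C /\ subset B C.

Definition discrete : upart := fun B => exists u, B = (fun v => v = u).
Definition indiscrete : upart := fun B => B = (fun _ => True).

Definition pjoin (pi sigma : upart) : upart :=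
  fun D => exists B C, pi B /\ sigma C /\ D = (fun u => B u /\ C u) /\ nonempty D.

Definition meet_rel (pi sigma : upart) : relation U :=
  fun u v => exists B, (pi B \/ sigma B) /\ B u /\ B v.

Definition meet_eqv (pi sigma : upart) : relation U :=
  clos_refl_sym_trans U (meet_rel pi sigma).

Definition pmeet (pi sigma : upart) : upart :=
  fun D => exists u, D = meet_eqv pi sigma u.

Definition contained_in_block (sigma : upart) (B : uset) : Prop :=
  exists C, sigma C /\ subset B C.

Definition pimp (sigma pi : upart) : upart :=
  fun D => (pi D /\ ~ contained_in_block sigma D) \/
           (exists u, D = (fun v => v = u) /\
              exists B, pi B /\ B u /\ contained_in_block sigma B).

Definition Bpi (pi : upart) : upart -> Prop :=
  fun P => exists sigma, is_partition sigma /\ P = pimp sigma pi.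

Definition pi_ns (pi : upart) : upart :=
  fun B => pi B /\ exists u v, B u /\ B v /\ u <> v.

(* Phi (sigma => pi) = blocks of pi_ns contained in some block of sigma;
   defined on an element P of B_pi through some representing sigma
   (well-definedness is part of the theorem). *)
Definition Phi (pi : upart) (P : upart) : upart :=
  fun B => pi_ns pi B /\
    exists sigma, is_partition sigma /\ P = pimp sigma pi /\
                  contained_in_block sigma B.

Definition PhiS (pi sigma : upart) : upart :=
  fun B => pi_ns pi B /\ contained_in_block sigma B.

Definition set_union (S T : upart) : upart := fun B => S B \/ T B.
Definition set_inter (S T : upart) : upart := fun B => S B /\ T B.
Definition set_diff (S T : upart) : upart := fun B => S B /\ ~ T B.
Definition set_empty : upart := fun _ => False.
Definition set_subset (S T : upart) : Prop := forall B, S B -> T B.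

End Partitions.

Arguments discrete {U}.
Arguments indiscrete {U}.
Arguments set_empty {U}.

(* Main.v *)
Require Import Defs.
From Stdlib Require Import Classical FunctionalExtensionality PropExtensionality Relations.

Ltac sext := apply functional_extensionality; intro; apply propositional_extensionality; split.

Definition G {U} (pi S : upart U) : upart U := fun D => (pi D /\ ~ S D) \/
  exists u, D = (fun v => v = u) /\ exists B, S B /\ B u.

Lemma L_disj {U} {pi : upart U} (hpi : is_partition pi) {B C u} :
  pi B -> pi C -> B u -> C u -> B = C.
Proof. intros. destruct hpi as [_ [h _]]. apply h; eauto. Qed.

Lemma L_sing {U} {pi : upart U} {B u} :
  pi B -> ~ pi_ns pi B -> B u -> B = (fun v => v = u).
Proof.
  intros hB hn hu. sext; intro h.
  - apply NNPP; intro hne. apply hn. split; auto. exists x, u; auto.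
  - subst; auto.
Qed.

Lemma L_ns_cont {U} (pi sigma : upart U) B :
  pi_ns pi B -> (pimp sigma pi B <-> ~ contained_in_block sigma B).
Proof.
  intros [hB [a [b [ha [hb hab]]]]]. split.
  - intros [[_ h]|[u [e _]]]; auto. subst. exfalso; apply hab; congruence.
  - intro h. left; auto.
Qed.

Lemma L_Gpimp {U} {pi : upart U} (hpi : is_partition pi) sigma :
  pimp sigma pi = G pi (PhiS pi sigma).
Proof.
  sext.
  - intros [[hp hc]|[u [e [B [hB [hu hc]]]]]].
    + left. split; auto. intros [_ h]; auto.
    + destruct (classic (pi_ns pi B)) as [hn|hn].
      * right. exists u. split; auto. exists B. split; [split|]; auto.
      * left. pose proof (L_sing hB hn hu) as eB. subst x. rewrite <- eB.
        split; auto. intros [h _]; auto.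
  - intros [[hp hc]|[u [e [B [[hn hc] hu]]]]].
    + destruct (classic (contained_in_block sigma x)) as [h|h].
      * assert (hn : ~ pi_ns pi x) by (intro; apply hc; split; auto).
        destruct hpi as [hne _]. destruct (hne _ hp) as [u hu].
        right. exists u. split. apply (L_sing hp hn hu). exists x. auto.
      * left; auto.
    + right. exists u. split; auto. exists B. destruct hn; auto.
Qed.

Lemma L_Gpart {U} {pi : upart U} (hpi : is_partition pi) T :
  set_subset T pi -> is_partition (G pi T).
Proof.
  intros hT. pose proof hpi as [hne [hdj hcv]]. split; [|split].
  - intros B [[hB _]|[u [e _]]]; auto. subst. exists u; auto.
  - intros B C [[hB hnB]|[u [eB [B' [hB' hu]]]]] [[hC hnC]|[v [eC [C' [hC' hv]]]]] [w [hw1 hw2]].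
    + eauto.
    + subst C. simpl in hw2. subst w. exfalso. apply hnB.
      rewrite (L_disj hpi hB (hT _ hC') hw1 hv). auto.
    + subst B. simpl in hw1. subst w. exfalso. apply hnC.
      rewrite (L_disj hpi hC (hT _ hB') hw2 hu). auto.
    + subst. simpl in *. congruence.
  - intro u. destruct (hcv u) as [B [hB hu]].
    destruct (classic (T B)).
    + exists (fun v => v = u). split; auto. right. exists u. split; eauto.
    + exists B. split; auto. left; auto.
Qed.

Lemma L_PhiS_G {U} {pi : upart U} (hpi : is_partition pi) T :
  set_subset T (pi_ns pi) -> PhiS pi (G pi T) = set_diff (pi_ns pi) T.
Proof.
  intros hT. sext.
  - intros [hn [C [hC hs]]]. split; auto.
    pose proof hn as [hB [a [b [ha [hb hab]]]]].
    destruct hC as [[hC hnC]|[u [e _]]].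
    + rewrite (L_disj hpi hB hC ha (hs _ ha)). auto.
    + subst. exfalso. apply hab. rewrite (hs _ ha), (hs _ hb). auto.
  - intros [hn hnT]. split; auto. exists x. split.
    + left. destruct hn; auto.
    + intros u h; auto.
Qed.

Lemma L_PhiG {U} {pi : upart U} (hpi : is_partition pi) T :
  set_subset T (pi_ns pi) -> Phi pi (G pi T) = T.
Proof.
  intros hT. sext.
  - intros [hn [sigma [hs [e hc]]]].
    apply NNPP. intro hnT. apply (proj1 (L_ns_cont _ sigma _ hn)); auto.
    rewrite <- e. left. destruct hn; auto.
  - intro hx. split; auto.
    assert (hsub : set_subset (set_diff (pi_ns pi) T) pi) by (intros B [[h _] _]; auto).
    exists (G pi (set_diff (pi_ns pi) T)). split. apply L_Gpart; auto.
    split.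
    + rewrite (L_Gpimp hpi), (L_PhiS_G hpi) by (intros B [h _]; auto).
      f_equal. sext.
      * intro h. split; auto. intros [_ h']; auto.
      * intros [h1 h2]. apply NNPP. intro; apply h2. split; auto.
    + 
      assert (H2 : PhiS pi (G pi (set_diff (pi_ns pi) T)) x).
      { rewrite (L_PhiS_G hpi) by (intros B [h _]; auto). split; auto. intros [_ h]; auto. }
      destruct H2; auto.
Qed.

Lemma L_BpiG {U} {pi : upart U} (hpi : is_partition pi) T :
  set_subset T (pi_ns pi) -> Bpi pi (G pi T).
Proof.
  intros hT. exists (G pi (set_diff (pi_ns pi) T)). split.
  apply L_Gpart; auto. intros B [[h _] _]; auto.
  rewrite (L_Gpimp hpi), (L_PhiS_G hpi) by (intros B [h _]; auto).
  f_equal. sext.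
  * intro h. split; auto. intros [_ h']; auto.
  * intros [h1 h2]. apply NNPP. intro; apply h2. split; auto.
Qed.

Lemma L_sub {U} {pi S : upart U} : set_subset S (pi_ns pi) -> set_subset S pi.
Proof. intros h B hB. destruct (h _ hB); auto. Qed.

Lemma L_join {U} {pi : upart U} (hpi : is_partition pi) S T :
  set_subset S (pi_ns pi) -> set_subset T (pi_ns pi) ->
  pjoin (G pi S) (G pi T) = G pi (set_union S T).
Proof.
  intros hS hT. pose proof (L_Gpart hpi _ (L_sub hS)) as [_ [_ cS]].
  pose proof (L_Gpart hpi _ (L_sub hT)) as [_ [_ cT]].
  sext.
  - intros [B [C [hB [hC [e [w hw]]]]]]. rewrite e in hw. destruct hw as [hwB hwC].
    destruct hB as [[hB hnB]|[u [eB [B' [hB' hu]]]]].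
    + destruct hC as [[hC hnC]|[v [eC [C' [hC' hv]]]]].
      * assert (BC : B = C) by (apply (L_disj hpi hB hC hwB hwC)). subst C.
        assert (xB : x = B) by (rewrite e; sext; [intros [h _]|intro h; split]; auto).
        rewrite xB. left. split; auto. intros [h|h]; auto.
      * subst C. simpl in hwC. subst w.
        assert (xv : x = (fun y => y = v)) by (rewrite e; sext; [intros [_ h]|intro h; split]; auto; subst; auto).
        rewrite xv. right. exists v. split; auto. exists C'. split; auto. right; auto.
    + subst B. simpl in hwB. subst w.
      assert (xv : x = (fun y => y = u)) by (rewrite e; sext; [intros [h _]|intro h; split]; auto; subst; auto).
      rewrite xv. right. exists u. split; auto. exists B'. split; auto. left; auto.
  - intros [[hp hn]|[u [e [B [hB hu]]]]].
    + exists x, x. split; [left|split; [left|split]].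
      * split; auto. intro; apply hn; left; auto.
      * split; auto. intro; apply hn; right; auto.
      * sext; [intro h; split|intros [h _]]; auto.
      * destruct hpi as [hne _]; auto.
    + subst x. destruct hB as [hB|hB].
      * destruct (cT u) as [C [hC hCu]]. exists (fun v => v = u), C.
        split. right. exists u. split; eauto.
        split; auto. split. sext; [intro h; subst; split; auto|intros [h _]; auto].
        exists u. auto.
      * destruct (cS u) as [C [hC hCu]]. exists C, (fun v => v = u).
        split; auto. split. right. exists u. split; eauto.
        split. sext; [intro h; subst; split; auto|intros [_ h]; auto].
        exists u. auto.
Qed.

Definition Rm {U} (pi S T : upart U) (u v : U) : Prop :=
  u = v \/ exists B, pi B /\ B u /\ B v /\ ~ (S B /\ T B).

Lemma L_meet_eqv {U} {pi : upart U} (hpi : is_partition pi) S T u v :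
  meet_eqv (G pi S) (G pi T) u v <-> Rm pi S T u v.
Proof.
  split.
  - intro h. induction h as [x y h|x|x y _ IH|x y z _ IH1 _ IH2].
    + destruct h as [B [[hB|hB] [hx hy]]].
      * destruct hB as [[hB hn]|[w [e _]]].
        -- right. exists B. repeat split; auto. intros [h _]; auto.
        -- subst. simpl in *. left; congruence.
      * destruct hB as [[hB hn]|[w [e _]]].
        -- right. exists B. repeat split; auto. intros [_ h]; auto.
        -- subst. simpl in *. left; congruence.
    + left; auto.
    + destruct IH as [e|[B [hB [h1 [h2 h3]]]]]. left; auto. right; exists B; auto.
    + destruct IH1 as [e|[B [hB [h1 [h2 h3]]]]]; [subst; auto|].
      destruct IH2 as [e|[C [hC [k1 [k2 k3]]]]]; [subst; right; exists B; auto|].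
      assert (BC := L_disj hpi hB hC h2 k1). subst C. right. exists B. auto.
  - intros [e|[B [hB [h1 [h2 h3]]]]].
    + subst. apply rst_refl.
    + apply rst_step. exists B. split; auto.
      destruct (classic (S B)) as [hs|hs].
      * right. left. split; auto.
      * left. left. split; auto.
Qed.

Lemma L_meet {U} {pi : upart U} (hpi : is_partition pi) S T :
  set_subset S (pi_ns pi) ->
  pmeet (G pi S) (G pi T) = G pi (set_inter S T).
Proof.
  intro hS. sext.
  - intros [u e]. pose proof hpi as [_ [_ hcv]]. destruct (hcv u) as [B [hB hu]].
    destruct (classic (S B /\ T B)) as [hst|hst].
    + assert (xu : x = (fun v => v = u)).
      { rewrite e. sext; intro h.
        - apply (L_meet_eqv hpi) in h. destruct h as [h|[C [hC [h1 [h2 h3]]]]]; [congruence|].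
          exfalso. apply h3. rewrite (L_disj hpi hC hB h1 hu). auto.
        - apply (L_meet_eqv hpi). left; auto. }
      rewrite xu. right. exists u. split; auto. exists B. split; auto.
    + assert (xB : x = B).
      { rewrite e. sext; intro h.
        - apply (L_meet_eqv hpi) in h. destruct h as [h|[C [hC [h1 [h2 h3]]]]]. subst; auto.
          rewrite (L_disj hpi hB hC hu h1). auto.
        - apply (L_meet_eqv hpi). right. exists B. auto. }
      rewrite xB. left. split; auto.
  - intros [[hp hn]|[u [e [B [hB hu]]]]].
    + pose proof hpi as [hne _]. destruct (hne _ hp) as [u hu]. exists u.
      sext; intro h.
      * apply (L_meet_eqv hpi). right. exists x. auto.
      * apply (L_meet_eqv hpi) in h. destruct h as [h|[C [hC [h1 [h2 h3]]]]]. subst; auto.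
        rewrite (L_disj hpi hp hC hu h1). auto.
    + exists u. subst x. sext; intro h.
      * apply (L_meet_eqv hpi). left; auto.
      * apply (L_meet_eqv hpi) in h. destruct h as [h|[C [hC [h1 [h2 h3]]]]]. subst; auto.
        exfalso. apply h3. destruct hB as [hB1 hB2].
        rewrite (L_disj hpi hC (L_sub hS _ hB1) h1 hu). auto.
Qed.

Lemma Lcont1 {U} {pi : upart U} (hpi : is_partition pi) S u :
  set_subset S (pi_ns pi) -> contained_in_block (G pi S) (fun v => v = u).
Proof.
  intro hS. pose proof (L_Gpart hpi _ (L_sub hS)) as [_ [_ c]].
  destruct (c u) as [C [hC hu]]. exists C. split; auto. intros v e; subst; auto.
Qed.

Lemma Lcont {U} {pi : upart U} (hpi : is_partition pi) S B :
  set_subset S (pi_ns pi) -> pi B ->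
  (contained_in_block (G pi S) B <-> ~ (pi_ns pi B /\ S B)).
Proof.
  intros hS hB. split.
  - intros [C [hC hs]] [hn hSB]. pose proof hn as [_ [a [b [ha [hb hab]]]]].
    destruct hC as [[hC hnC]|[u [e _]]].
    + apply hnC. rewrite <- (L_disj hpi hB hC ha (hs _ ha)). auto.
    + subst. apply hab. rewrite (hs _ ha), (hs _ hb). auto.
  - intro h. destruct (classic (pi_ns pi B)) as [hn|hn].
    + exists B. split. left. split; auto. intros v hv; auto.
    + pose proof hpi as [hne _]. destruct (hne _ hB) as [u hu].
      rewrite (L_sing hB hn hu). apply Lcont1; auto.
Qed.

Lemma L_imp {U} {pi : upart U} (hpi : is_partition pi) S T :
  set_subset S (pi_ns pi) -> set_subset T (pi_ns pi) ->
  pimp (G pi S) (G pi T) = G pi (set_union (set_diff (pi_ns pi) S) T).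
Proof.
  intros hS hT. sext.
  - intros [[hD hc]|[u [e [B [hB [hu hc]]]]]].
    + destruct hD as [[hD hnT]|[u [e _]]].
      * left. split; auto. intros [[hn hnS]|h]; auto.
        apply hc. apply (Lcont hpi); auto. intros [_ h]; auto.
      * subst. exfalso. apply hc. apply Lcont1; auto.
    + subst x. destruct hB as [[hB hnT]|[w [eB [B' [hB' hw]]]]].
      * pose proof (proj1 (Lcont hpi _ _ hS hB) hc) as hc'.
        destruct (classic (pi_ns pi B)) as [hn|hn].
        -- right. exists u. split; auto. exists B. split; auto. left. split; auto.
        -- rewrite <- (L_sing hB hn hu). left. split; auto.
           intros [[h _]|h]; auto.
      * subst B. simpl in hu. subst w. right. exists u. split; auto.
        exists B'. split; auto. right; auto.
  - intros [[hp hn]|[u [e [B [hB hu]]]]].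
    + destruct (classic (pi_ns pi x)) as [hns|hns].
      * left. split. left. split; auto. intro; apply hn; right; auto.
        intro hc. apply (Lcont hpi _ _ hS hp) in hc. apply hc. split; auto.
        apply NNPP. intro; apply hn. left; split; auto.
      * pose proof hpi as [hne _]. destruct (hne _ hp) as [u hu].
        right. exists u. split. apply (L_sing hp hns hu).
        exists x. split; [left; split; [auto| intro; apply hn; right; auto]|].
        split; auto. apply (Lcont hpi _ _ hS hp). intros [h _]; auto.
    + subst x. right. exists u. split; auto.
      destruct (classic (T B)) as [hTB|hTB].
      * exists (fun v => v = u). split. right. exists u. split; eauto.
        split; auto. apply Lcont1; auto.
      * destruct hB as [[hn hnS]|h]; [|contradiction].
        exists B. split. left. split; auto. destruct hn; auto.
        split; auto. apply (Lcont hpi); auto. destruct hn; auto.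
        intros [_ h]; auto.
Qed.

Lemma PhiS_sub {U} (pi sigma : upart U) : set_subset (PhiS pi sigma) (pi_ns pi).
Proof. intros B [h _]; auto. Qed.

Lemma Bpi_G {U} {pi : upart U} (hpi : is_partition pi) P :
  Bpi pi P -> exists S, set_subset S (pi_ns pi) /\ P = G pi S.
Proof.
  intros [sigma [hs e]]. exists (PhiS pi sigma). split. apply PhiS_sub.
  rewrite e. apply L_Gpimp; auto.
Qed.

Lemma disc_part {U} : is_partition (@discrete U).
Proof.
  split; [|split].
  - intros B [u e]. subst. exists u. auto.
  - intros B C [u e1] [v e2] [w [h1 h2]]. subst. simpl in *. subst. auto.
  - intro u. exists (fun v => v = u). split; auto. exists u; auto.
Qed.

Lemma G_empty {U} {pi : upart U} (hpi : is_partition pi) : G pi set_empty = pi.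
Proof.
  sext.
  - intros [[h _]|[u [_ [B [[] _]]]]]; auto.
  - intro h. left. split; auto.
Qed.

Lemma G_ns {U} {pi : upart U} (hpi : is_partition pi) : G pi (pi_ns pi) = discrete.
Proof.
  sext.
  - intros [[hp hn]|[u [e _]]].
    + pose proof hpi as [hne _]. destruct (hne _ hp) as [u hu]. exists u.
      apply (L_sing hp hn hu).
    + exists u; auto.
  - intros [u e]. subst x. pose proof hpi as [_ [_ hcv]]. destruct (hcv u) as [B [hB hu]].
    destruct (classic (pi_ns pi B)) as [hn|hn].
    + right. exists u. split; auto. exists B. auto.
    + left. rewrite <- (L_sing hB hn hu). auto.
Qed.

Lemma PhiS_disc {U} (pi : upart U) : PhiS pi discrete = set_empty.
Proof.
  sext.
  - intros [[_ [a [b [ha [hb hab]]]]] [C [[u e] hs]]]. subst. apply hab.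
    rewrite (hs _ ha), (hs _ hb). auto.
  - intros [].
Qed.

Lemma PhiS_self {U} (pi : upart U) : PhiS pi pi = pi_ns pi.
Proof.
  sext.
  - intros [h _]; auto.
  - intro h. split; auto. exists x. split. destruct h; auto. intros v hv; auto.
Qed.

Theorem mainTheorem4 (U : Type) (hU : inhabited U) (pi : upart U)
  (hpi : is_partition pi) :
  (forall sigma, is_partition sigma -> Phi pi (pimp sigma pi) = PhiS pi sigma) /\
  (forall P, Bpi pi P -> set_subset (Phi pi P) (pi_ns pi)) /\
  (forall P Q, Bpi pi P -> Bpi pi Q -> Phi pi P = Phi pi Q -> P = Q) /\
  (forall S, set_subset S (pi_ns pi) -> exists P, Bpi pi P /\ Phi pi P = S) /\
  (forall sigma tau, is_partition sigma -> is_partition tau ->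
    (Bpi pi (pjoin (pimp sigma pi) (pimp tau pi)) /\
     Phi pi (pjoin (pimp sigma pi) (pimp tau pi)) =
       set_union (Phi pi (pimp sigma pi)) (Phi pi (pimp tau pi))) /\
    (Bpi pi (pmeet (pimp sigma pi) (pimp tau pi)) /\
     Phi pi (pmeet (pimp sigma pi) (pimp tau pi)) =
       set_inter (Phi pi (pimp sigma pi)) (Phi pi (pimp tau pi))) /\
    (Bpi pi (pimp (pimp sigma pi) (pimp tau pi)) /\
     Phi pi (pimp (pimp sigma pi) (pimp tau pi)) =
       set_union (set_diff (pi_ns pi) (Phi pi (pimp sigma pi)))
                 (Phi pi (pimp tau pi))) /\
    Phi pi (pimp (pimp sigma pi) pi) =
       set_diff (pi_ns pi) (Phi pi (pimp sigma pi))) /\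
  (pi = pimp discrete pi /\ Bpi pi pi /\ Phi pi pi = set_empty) /\
  (discrete = pimp pi pi /\ Bpi pi discrete /\ Phi pi discrete = pi_ns pi) /\
  (forall P, Bpi pi P -> refines pi P /\ refines P discrete).
Proof.
  assert (hE : set_subset (@set_empty U) (pi_ns pi)) by (intros B []).
  assert (hN : set_subset (pi_ns pi) (pi_ns pi)) by (intros B h; auto).
  split; [|split; [|split; [|split; [|split; [|split; [|split]]]]]].
  - intros sigma hs. rewrite (L_Gpimp hpi). apply (L_PhiG hpi). apply PhiS_sub.
  - intros P _ B [h _]; auto.
  - intros P Q hP hQ e.
    destruct (Bpi_G hpi _ hP) as [S [hS eS]]. destruct (Bpi_G hpi _ hQ) as [T [hT eT]].
    subst. rewrite (L_PhiG hpi _ hS), (L_PhiG hpi _ hT) in e. subst; auto.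
  - intros S hS. exists (G pi S). split. apply L_BpiG; auto. apply L_PhiG; auto.
  - intros sigma tau hs ht.
    rewrite !(L_Gpimp hpi).
    pose proof (PhiS_sub pi sigma) as hS. pose proof (PhiS_sub pi tau) as hT.
    set (S := PhiS pi sigma) in *. set (T := PhiS pi tau) in *.
    rewrite (L_PhiS_G hpi _ hS).
    assert (hU1 : set_subset (set_union S T) (pi_ns pi)) by (intros B [h|h]; auto).
    assert (hI : set_subset (set_inter S T) (pi_ns pi)) by (intros B [h _]; auto).
    assert (hD : set_subset (set_diff (pi_ns pi) S) (pi_ns pi)) by (intros B [h _]; auto).
    assert (hW : set_subset (set_union (set_diff (pi_ns pi) S) T) (pi_ns pi)) by (intros B [h|h]; auto; destruct h; auto).
    rewrite (L_join hpi _ _ hS hT), (L_meet hpi _ _ hS), (L_imp hpi _ _ hS hT).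
    rewrite !(L_PhiG hpi) by auto.
    repeat split; apply L_BpiG; auto.
  - rewrite (L_Gpimp hpi), PhiS_disc, (G_empty hpi). repeat split; auto.
    + exists discrete. split. apply disc_part. rewrite (L_Gpimp hpi), PhiS_disc, (G_empty hpi); auto.
    + pattern pi at 2. rewrite <- (G_empty hpi). apply (L_PhiG hpi); auto.
  - rewrite (L_Gpimp hpi), PhiS_self, (G_ns hpi). repeat split; auto.
    + exists pi. split; auto. rewrite (L_Gpimp hpi), PhiS_self, (G_ns hpi); auto.
    + rewrite <- (G_ns hpi). apply (L_PhiG hpi); auto.
  - intros P hP. destruct (Bpi_G hpi _ hP) as [S [hS e]]. subst P.
    pose proof (L_Gpart hpi _ (L_sub hS)) as [_ [_ hcv]]. split.
    + intros D [[hD _]|[u [e [B [hB hu]]]]].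
      * exists D. split; auto. intros v h; auto.
      * subst D. exists B. split. apply (L_sub hS); auto. intros v h; simpl in h; subst; auto.
    + intros D [u e]. subst D. destruct (hcv u) as [C [hC hu]]. exists C. split; auto.
      intros v h; simpl in h; subst; auto.
Qed.
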